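(* Let $\mathcal H$ be a complex Hilbert space of finite dimension $d$, let $A,B$ be Hermitian operators on $\mathcal H$, let $|\psi\rangle,|\phi\rangle$ be unit vectors, and let $\{|\phi\rangle,|\phi^\perp_1\rangle,\dots,|\phi^\perp_{d-1}\rangle\}$ be an orthonormal basis of $\mathcal H$. Assume $a:=\langle\Delta A\rangle^{\phi}_{\psi}\neq0$ and $b:=\langle\Delta B\rangle^{\phi}_{\psi}\neq 0$. For each choice of sign, set $$S_{\pm}=\sum_{k=1}^{d-1}\Big|\langle\psi|\big(\tfrac{A}{a}\pm i\tfrac{B}{b}\big)|\phi^\perp_k\rangle\Big|^2 .$$ Then, for each choice of sign, $$a\,b\,\Big(1-\tfrac12 S_{\pm}\Big)=\mp\Big(\tfrac{1}{2i}\langle\psi|[A,B]|\psi\rangle-\operatorname{Im}W_{AB}\Big),$$ so that, whenever $1-\tfrac12S_\pm\neq0$, $$\langle\Delta A\rangle^{\phi}_{\psi}\langle\Delta B\rangle^{\phi}_{\psi}=\frac{\mp\big(\frac{1}{2i}\langle\psi|[A,B]|\psi\rangle-\operatorname{Im}W_{AB}\big)}{1-\frac12 S_{\pm}},$$ where $W_{AB}=\langle\psi|A|\phi\rangle\langle\phi|B|\psi\rangle$.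
   Context: PPS standard deviation: for a Hermitian operator $A$ and unit vectors $|\psi\rangle,|\phi\rangle$, $\langle\Delta A\rangle^{\phi}_{\psi}:=\sqrt{\langle\psi|A^2|\psi\rangle-|\langle\phi|A|\psi\rangle|^2}$. $[A,B]=AB-BA$. *)

(* Defs.v *)
(* Scalars: an arbitrary numClosedFieldType C (e.g. algC, or
   complex R); the Hilbert space of dimension d is 'cV[C]_d with the standard
   inner product. *)
From HB Require Import structures.
From mathcomp Require Import all_boot all_order all_algebra.
Set Implicit Arguments. Unset Strict Implicit. Unset Printing Implicit Defensive.
Import Order.TTheory GRing.Theory Num.Theory.
Local Open Scope ring_scope.

Section Defs.
Variable C : numClosedFieldType.
Variable d : nat.

Definition ip (u v : 'cV[C]_d) : C := \sum_(i < d) (u i 0)^* * v i 0.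

Definition adj (M : 'M[C]_d) : 'M[C]_d := map_mx Num.conj (M^T).

Definition herm_op (M : 'M[C]_d) : Prop := adj M = M.

Definition unit_vec (u : 'cV[C]_d) : Prop := ip u u = 1.

Definition braket (u : 'cV[C]_d) (M : 'M[C]_d) (v : 'cV[C]_d) : C := ip u (M *m v).

Definition onb_with (phi : 'cV[C]_d) (perp : 'I_d.-1 -> 'cV[C]_d) : Prop :=
  [/\ ip phi phi = 1,
      (forall k, ip phi (perp k) = 0),
      (forall j k, ip (perp j) (perp k) = (j == k)%:R) &
      (forall v : 'cV[C]_d, v = ip phi v *: phi + \sum_(k < d.-1) ip (perp k) v *: perp k)].

Definition pps_sd (A : 'M[C]_d) (psi phi : 'cV[C]_d) : C :=
  sqrtC (braket psi (A *m A) psi - `|braket phi A psi| ^+ 2).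

Definition commut (A B : 'M[C]_d) : 'M[C]_d := A *m B - B *m A.

Definition W (A B : 'M[C]_d) (psi phi : 'cV[C]_d) : C :=
  braket psi A phi * braket phi B psi.

(* S_sigma with sigma = +1 (upper sign) or -1 (lower sign) *)
Definition S_sum (A B : 'M[C]_d) (psi phi : 'cV[C]_d) (perp : 'I_d.-1 -> 'cV[C]_d)
  (sigma : C) : C :=
  let a := pps_sd A psi phi in let b := pps_sd B psi phi in
  \sum_(k < d.-1)
    `|braket psi (a^-1 *: A + (sigma * 'i) *: (b^-1 *: B)) (perp k)| ^+ 2.
End Defs.

(* Main.v *)
Require Import Defs.
From HB Require Import structures.
From mathcomp Require Import all_boot all_order all_algebra.
From mathcomp Require Import ring.
Import Order.TTheory GRing.Theory Num.Theory.
Local Open Scope ring_scope.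

Section H.
Variable C : numClosedFieldType.
Variable d : nat.
Implicit Types u v w : 'cV[C]_d.

Lemma ipDr u v w : ip u (v + w) = ip u v + ip u w.
Proof. by rewrite /ip -big_split; apply: eq_bigr => i _; rewrite mxE mulrDr. Qed.

Lemma ipBr u v w : ip u (v - w) = ip u v - ip u w.
Proof. by rewrite /ip -sumrB; apply: eq_bigr => i _; rewrite !mxE mulrBr. Qed.

Lemma ipZr u c v : ip u (c *: v) = c * ip u v.
Proof. by rewrite /ip mulr_sumr; apply: eq_bigr => i _; rewrite mxE mulrCA. Qed.

Lemma ipsumr n u (f : 'I_n -> 'cV[C]_d) : ip u (\sum_(k < n) f k) = \sum_(k < n) ip u (f k).
Proof.
rewrite /ip exchange_big /=; apply: eq_bigr => i _.
by rewrite summxE mulr_sumr.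
Qed.

Lemma ipC u v : ip u v = (ip v u)^*.
Proof.
rewrite /ip rmorph_sum; apply: eq_bigr => i _.
by rewrite rmorphM /= conjCK mulrC.
Qed.

Lemma ip_adj M u v : ip u (M *m v) = ip (adj M *m u) v.
Proof.
rewrite /ip /adj.
under eq_bigr => i _ do rewrite mxE mulr_sumr.
rewrite exchange_big /=; apply: eq_bigr => j _.
rewrite mxE rmorph_sum mulr_suml; apply: eq_bigr => i _.
by rewrite !mxE rmorphM /= conjCK mulrCA mulrA.
Qed.

Lemma ip_herm M u v : herm_op M -> ip u (M *m v) = ip (M *m u) v.
Proof. by move=> h; rewrite ip_adj h. Qed.

Lemma parseval phi perp u v : onb_with phi perp ->
  ip u v = (ip phi u)^* * ip phi v + \sum_(k < d.-1) (ip (perp k) u)^* * ip (perp k) v.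
Proof.
case=> _ _ _ hexp.
rewrite {1}(hexp v) ipDr ipZr ipsumr (ipC u phi) mulrC; congr (_ + _).
by apply: eq_bigr => k _; rewrite ipZr (ipC u) mulrC.
Qed.

Lemma pps_sd_sum M psi phi perp : herm_op M -> onb_with phi perp ->
  @pps_sd C d M psi phi =
  sqrtC (\sum_(k < d.-1) (ip (perp k) (M *m psi))^* * ip (perp k) (M *m psi) : C).
Proof.
move=> hM hon; rewrite /pps_sd /braket -mulmxA (ip_herm _ psi _ hM).
rewrite (parseval _ _ _ _ hon) normCKC; congr sqrtC; ring.
Qed.

Lemma sum_ge0 n (f : 'I_n -> C) : 0 <= \sum_(k < n) (f k)^* * f k.
Proof. by apply: sumr_ge0 => k _; rewrite -normCKC exprn_ge0. Qed.

Lemma pps_conj M psi phi perp : herm_op M -> onb_with phi perp ->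
  (@pps_sd C d M psi phi)^* = pps_sd M psi phi.
Proof.
move=> hM hon; rewrite (pps_sd_sum _ _ _ _ hM hon); apply: conj_Creal.
by apply: sqrtC_real; apply: sum_ge0.
Qed.

Lemma pps_sq M psi phi perp : herm_op M -> onb_with phi perp ->
  @pps_sd C d M psi phi ^+ 2 =
  \sum_(k < d.-1) (ip (perp k) (M *m psi))^* * ip (perp k) (M *m psi).
Proof. by move=> hM hon; rewrite (pps_sd_sum _ _ _ _ hM hon) sqrtCK. Qed.
End H.

Theorem theorem2 (C : numClosedFieldType) (d : nat) (A B : 'M[C]_d)
  (psi phi : 'cV[C]_d) (perp : 'I_d.-1 -> 'cV[C]_d) (sigma : C) :
  herm_op A -> herm_op B ->
  unit_vec psi -> unit_vec phi ->
  onb_with phi perp ->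
  pps_sd A psi phi != 0 -> pps_sd B psi phi != 0 ->
  sigma = 1 \/ sigma = -1 ->
  let a := pps_sd A psi phi in
  let b := pps_sd B psi phi in
  let S := S_sum A B psi phi perp sigma in
  let R := (2 * 'i)^-1 * braket psi (commut A B) psi - 'Im (W A B psi phi) in
  a * b * (1 - 2^-1 * S) = - sigma * R /\
  (1 - 2^-1 * S != 0 -> a * b = (- sigma * R) / (1 - 2^-1 * S)).
Proof.
move=> hA hB _ _ hon ha hb hs.
have hsc : sigma^* = sigma by case: hs => ->; rewrite ?rmorphN rmorph1.
have hss : sigma * sigma = 1 by case: hs => ->; rewrite ?mulrNN mulr1.
have hii : 'i * 'i = -1 :> C by rewrite -expr2 sqrCi.
set x := fun k => ip (perp k) (A *m psi).
set y := fun k => ip (perp k) (B *m psi).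
set x0 := ip phi (A *m psi).
set y0 := ip phi (B *m psi).
have hac := pps_conj _ _ _ psi _ _ hA hon.
have hbc := pps_conj _ _ _ psi _ _ hB hon.
have ha2 := pps_sq _ _ _ psi _ _ hA hon.
have hb2 := pps_sq _ _ _ psi _ _ hB hon.
set a := pps_sd A psi phi in ha hac ha2 *.
set b := pps_sd B psi phi in hb hbc hb2 *.
have hS : S_sum A B psi phi perp sigma =
   a^-1 * a^-1 * (\sum_k (x k)^* * x k) + b^-1 * b^-1 * (\sum_k (y k)^* * y k)
   + sigma * 'i * a^-1 * b^-1 * (\sum_k (y k)^* * x k - \sum_k (x k)^* * y k).
  rewrite /S_sum -/a -/b.
  transitivity (\sum_(k < d.-1) (a^-1 * a^-1 * ((x k)^* * x k) + b^-1 * b^-1 * ((y k)^* * y k)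
     + sigma * 'i * a^-1 * b^-1 * ((y k)^* * x k - (x k)^* * y k))); last first.
    by rewrite !big_split /= -!mulr_sumr sumrB.
  apply: eq_bigr => k _.
  rewrite /braket mulmxDl -!scalemxAl ipDr !ipZr !(ip_herm _ _ _ psi _ hA) !(ip_herm _ _ _ psi _ hB).
  rewrite (ipC _ _ _ (perp k)) (ipC _ _ (B *m psi)) -/(x k) -/(y k).
  rewrite normCK !(rmorphD, rmorphM) /= !conjCK conjCi hsc !fmorphV /= hac hbc.
  apply/eqP; rewrite -subr_eq0; apply/eqP.
  transitivity ((-(sigma*sigma*('i*'i)) - 1) * (b^-1*b^-1*((y k)^* * y k))); first ring.
  by rewrite hii hss mulrN1 opprK subrr mul0r.
have hP : braket psi (commut A B) psi =
   (x0^* * y0 + \sum_k (x k)^* * y k) - (y0^* * x0 + \sum_k (y k)^* * x k).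
  rewrite /braket /commut mulmxBl ipBr -!mulmxA (ip_herm _ _ _ psi _ hA) (ip_herm _ _ _ psi _ hB).
  by rewrite (parseval _ _ _ _ (A *m psi) (B *m psi) hon) (parseval _ _ _ _ (B *m psi) (A *m psi) hon).
have hW : W A B psi phi = x0^* * y0.
  by rewrite /W /braket (ip_herm _ _ _ psi _ hA) ipC.
move=> a0 b0 S R; rewrite /S /R /a0 /b0 {a0 b0 S R}.
rewrite hS hP ImE hW rmorphM /= conjCK -ha2 -hb2 invfM invCi.

match goal with |- ?L = ?Rr /\ _ =>
  have h1 : L = Rr by field; rewrite ha hb ?pnatr_eq0 end.
split=> // hnz; by rewrite -h1 mulfK.
Qed.
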